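(* For all $j,k\geq2$ with $j<k$, $\mathsf{TS}^1_j\nleq_{\mathrm{W}}\mathsf{TS}^1_k$.
   Context: For $k\geq2$, $\mathsf{TS}^1_k$ is the problem whose instances are colorings $f:\omega\to k$ and whose solutions are infinite sets $S$ together with a color $c<k$ such that $f(x)\neq c$ for all $x\in S$ (thin sets). $\mathsf{P}\leq_{\mathrm{W}}\mathsf{Q}$ means there are Turing functionals $\Phi,\Psi$ such that for every instance $A$ of $\mathsf{P}$, $\Phi(A)$ is an instance of $\mathsf{Q}$, and for every solution $T$ to $\Phi(A)$, $\Psi(A\oplus T)$ is a solution to $A$. *)

(* Defs.v *)
From Stdlib Require Import List Arith PeanoNat.
Import ListNotations.

(** * Oracle partial recursive functions (mu-recursive with an oracle primitive).
    Argument lists are untyped: missing arguments default to 0. *)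
Inductive prog : Type :=
| PZero : prog
| PSucc : prog
| PProj : nat -> prog
| POrc : prog
| PComp : prog -> list prog -> prog
| PRec : prog -> prog -> prog           (* primitive recursion on first arg *)
| PMu : prog -> prog.                   (* least k with p (k :: args) = 0 *)

(** Fuel-indexed evaluation relative to an oracle [A : nat -> nat];
    [None] means "not (yet) converged". Results are stable as fuel grows. *)
Fixpoint eval (fuel : nat) (A : nat -> nat) (p : prog) (args : list nat)
  {struct fuel} : option nat :=
  match fuel with
  | 0 => None
  | S fu =>
    match p with
    | PZero => Some 0
    | PSucc => Some (S (hd 0 args))
    | PProj i => Some (nth i args 0)
    | POrc => Some (A (hd 0 args))
    | PComp f gs =>
        let fix evals (gs : list prog) : option (list nat) :=
          match gs with
          | [] => Some []
          | g :: gs' =>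
              match eval fu A g args, evals gs' with
              | Some v, Some vs => Some (v :: vs)
              | _, _ => None
              end
          end in
        match evals gs with
        | Some vs => eval fu A f vs
        | None => None
        end
    | PRec b s =>
        let rest := tl args in
        let fix go (n : nat) : option nat :=
          match n with
          | 0 => eval fu A b rest
          | S m =>
              match go m with
              | Some r => eval fu A s (m :: r :: rest)
              | None => None
              end
          end in
        go (hd 0 args)
    | PMu q =>
        let fix search (cnt k : nat) : option nat :=
          match cnt with
          | 0 => None
          | S c =>
              match eval fu A q (k :: args) with
              | Some 0 => Some k
              | Some _ => search c (S k)
              | None => None
              end
          end in
        search fu 0
    end
  end.

Definition computes (A : nat -> nat) (p : prog) (g : nat -> nat) : Prop :=
  forall x, exists n, eval n A p [x] = Some (g x).

Definition join (A T : nat -> nat) : nat -> nat :=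
  fun n => if Nat.even n then A (Nat.div2 n) else T (Nat.div2 n).

Record problem : Type := Problem {
  instance : (nat -> nat) -> Prop;
  solution : (nat -> nat) -> (nat -> nat) -> Prop
}.

Definition weihrauch_le (P Q : problem) : Prop :=
  exists Phi Psi : prog,
    forall A, instance P A ->
      (exists B, computes A Phi B /\ instance Q B) /\
      (forall B, computes A Phi B ->
         forall T, solution Q B T ->
           exists S, computes (join A T) Psi S /\ solution P A S).

(** TS^1_k. An instance is a coloring f : omega -> k.
    A solution (S, c) is coded by the oracle T with T 0 = c and
    T (n+1) = 1 if n in S, 0 otherwise. *)
Definition TS_instance (k : nat) (f : nat -> nat) : Prop :=
  forall x, f x < k.

Definition TS_solution (k : nat) (f T : nat -> nat) : Prop :=
  T 0 < k /\
  (forall n, T (S n) <= 1) /\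
  (forall m, exists n, m <= n /\ T (S n) = 1) /\          (* S infinite *)
  (forall x, T (S x) = 1 -> f x <> T 0).                 (* f(x) <> c on S *)

Definition TS (k : nat) : problem := Problem (TS_instance k) (TS_solution k).

(* Main.v *)
Require Import Defs.
From Stdlib Require Import List Arith PeanoNat Lia.
Import ListNotations.

Section S1.
Variable ev : prog -> list nat -> option nat.
Variable args : list nat.
Fixpoint evalsW (gs : list prog) : option (list nat) :=
          match gs with
          | [] => Some []
          | g :: gs' =>
              match ev g args, evalsW gs' with
              | Some v, Some vs => Some (v :: vs)
              | _, _ => None
              end
          end.
End S1.
Section S2.
Variable ev : prog -> list nat -> option nat.
Variables b s : prog.
Variable rest : list nat.
Fixpoint goW (n : nat) : option nat :=
          match n with
          | 0 => ev b rest
          | S m =>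
              match goW m with
              | Some r => ev s (m :: r :: rest)
              | None => None
              end
          end.
End S2.
Section S3.
Variable ev : prog -> list nat -> option nat.
Variable q : prog.
Variable args : list nat.
Fixpoint searchW (cnt k : nat) : option nat :=
          match cnt with
          | 0 => None
          | S c =>
              match ev q (k :: args) with
              | Some 0 => Some k
              | Some _ => searchW c (S k)
              | None => None
              end
          end.
End S3.

Lemma eval_S fu A p args : eval (S fu) A p args =
  match p with
    | PZero => Some 0
    | PSucc => Some (S (hd 0 args))
    | PProj i => Some (nth i args 0)
    | POrc => Some (A (hd 0 args))
    | PComp f gs =>
        match evalsW (eval fu A) args gs with
        | Some vs => eval fu A f vs
        | None => None
        end
    | PRec b s => goW (eval fu A) b s (tl args) (hd 0 args)
    | PMu q => searchW (eval fu A) q args fu 0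
  end.
Proof. destruct p; reflexivity. Qed.

Definition agree (A A' : nat -> nat) (M : nat) := forall y, y < M -> A' y = A y.

Lemma agree_mono A A' M M' : M <= M' -> agree A A' M' -> agree A A' M.
Proof. intros H H1 y Hy. apply H1. lia. Qed.

Section Mono.
Variables ev1 ev2 : prog -> list nat -> option nat.
Hypothesis H : forall p a v, ev1 p a = Some v -> ev2 p a = Some v.
Lemma evalsW_mono args gs vs : evalsW ev1 args gs = Some vs -> evalsW ev2 args gs = Some vs.
Proof.
  revert vs; induction gs as [|g gs IH]; simpl; intros vs E; auto.
  destruct (ev1 g args) eqn:E1; try discriminate.
  destruct (evalsW ev1 args gs) eqn:E2; try discriminate.
  rewrite (H _ _ _ E1), (IH _ eq_refl). exact E.
Qed.
Lemma goW_mono b s rest n v : goW ev1 b s rest n = Some v -> goW ev2 b s rest n = Some v.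
Proof.
  revert v; induction n as [|n IH]; simpl; intros v E; auto.
  destruct (goW ev1 b s rest n) eqn:E1; try discriminate.
  rewrite (IH _ eq_refl). auto.
Qed.
Lemma searchW_mono q args c k v : searchW ev1 q args c k = Some v -> searchW ev2 q args c k = Some v.
Proof.
  revert k; induction c as [|c IH]; simpl; intros k E; try discriminate.
  destruct (ev1 q (k :: args)) as [[|w]|] eqn:E1; try discriminate.
  - rewrite (H _ _ _ E1). exact E.
  - rewrite (H _ _ _ E1). auto.
Qed.
End Mono.

Lemma searchW_cnt ev q args c k v : searchW ev q args c k = Some v -> searchW ev q args (S c) k = Some v.
Proof.
  revert k; induction c as [|c IH]; intros k E; [discriminate|].
  change (match ev q (k :: args) with Some 0 => Some k | Some _ => searchW ev q args c (S k) | None => None end = Some v) in E.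
  change (match ev q (k :: args) with Some 0 => Some k | Some _ => searchW ev q args (S c) (S k) | None => None end = Some v).
  destruct (ev q (k :: args)) as [[|w]|]; try discriminate; auto.
Qed.

Lemma eval_S_mono n A p a v : eval n A p a = Some v -> eval (S n) A p a = Some v.
Proof.
  revert p a v; induction n as [|n IH]; intros p a v E; [discriminate|].
  rewrite eval_S in E |- *.
  destruct p; auto.
  - destruct (evalsW (eval n A) a l) eqn:E1; try discriminate.
    rewrite (evalsW_mono _ _ IH _ _ _ E1). auto.
  - apply (goW_mono _ _ IH). auto.
  - apply searchW_cnt. apply (searchW_mono _ _ IH). auto.
Qed.

Lemma eval_mono n m A p a v : n <= m -> eval n A p a = Some v -> eval m A p a = Some v.
Proof. induction 1; auto. intros E. apply eval_S_mono; auto. Qed.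

Lemma eval_det n m A p a v w : eval n A p a = Some v -> eval m A p a = Some w -> v = w.
Proof.
  intros E1 E2. destruct (Nat.le_ge_cases n m) as [h|h].
  - rewrite (eval_mono _ _ _ _ _ _ h E1) in E2. congruence.
  - rewrite (eval_mono _ _ _ _ _ _ h E2) in E1. congruence.
Qed.

Section Cont.
Variable E : (nat -> nat) -> prog -> list nat -> option nat.
Hypothesis H : forall p a A, exists M, forall A', agree A A' M -> E A' p a = E A p a.
Lemma evalsW_cont args gs A : exists M, forall A', agree A A' M -> evalsW (E A') args gs = evalsW (E A) args gs.
Proof.
  induction gs as [|g gs IH]; simpl.
  - exists 0; auto.
  - destruct IH as [M1 H1]. destruct (H g args A) as [M2 H2].
    exists (M1 + M2). intros A' Ag.
    rewrite H1 by (eapply agree_mono; [|exact Ag]; lia).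
    rewrite H2 by (eapply agree_mono; [|exact Ag]; lia). reflexivity.
Qed.
Lemma goW_cont b s rest n A : exists M, forall A', agree A A' M -> goW (E A') b s rest n = goW (E A) b s rest n.
Proof.
  induction n as [|n IH]; simpl.
  - apply H.
  - destruct IH as [M1 H1].
    destruct (goW (E A) b s rest n) as [r|] eqn:Eg.
    + destruct (H s (n :: r :: rest) A) as [M2 H2].
      exists (M1 + M2). intros A' Ag. rewrite H1 by (eapply agree_mono; [|exact Ag]; lia).
      apply H2. eapply agree_mono; [|exact Ag]; lia.
    + exists M1. intros A' Ag. rewrite H1; auto.
Qed.
Lemma searchW_cont q args c k A : exists M, forall A', agree A A' M -> searchW (E A') q args c k = searchW (E A) q args c k.
Proof.
  revert k; induction c as [|c IH]; intros k; simpl.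
  - exists 0; auto.
  - destruct (H q (k :: args) A) as [M1 H1]. destruct (IH (S k)) as [M2 H2].
    exists (M1 + M2). intros A' Ag. rewrite H1 by (eapply agree_mono; [|exact Ag]; lia).
    rewrite H2 by (eapply agree_mono; [|exact Ag]; lia). reflexivity.
Qed.
End Cont.

Lemma eval_cont n p a A : exists M, forall A', agree A A' M -> eval n A' p a = eval n A p a.
Proof.
  revert p a A; induction n as [|n IH]; intros p a A.
  - exists 0; auto.
  - destruct p.
    + exists 0; intros; rewrite !eval_S; auto.
    + exists 0; intros; rewrite !eval_S; auto.
    + exists 0; intros; rewrite !eval_S; auto.
    + exists (S (hd 0 a)); intros A' Ag; rewrite !eval_S. rewrite Ag; auto.
    + destruct (evalsW_cont (fun A => eval n A) IH a l A) as [M1 H1].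
      destruct (evalsW (eval n A) a l) as [vs|] eqn:Ev.
      * destruct (IH p vs A) as [M2 H2]. exists (M1 + M2). intros A' Ag. rewrite !eval_S.
        rewrite H1 by (eapply agree_mono; [|exact Ag]; lia). rewrite Ev.
        apply H2. eapply agree_mono; [|exact Ag]; lia.
      * exists M1. intros A' Ag. rewrite !eval_S. rewrite H1 by auto. rewrite Ev. auto.
    + destruct (goW_cont (fun A => eval n A) IH p1 p2 (tl a) (hd 0 a) A) as [M H1].
      exists M. intros. rewrite !eval_S. auto.
    + destruct (searchW_cont (fun A => eval n A) IH p a n 0 A) as [M H1].
      exists M. intros. rewrite !eval_S. auto.
Qed.

From Stdlib Require Import Classical ClassicalEpsilon.

Lemma pigeon n : forall m (f : nat -> nat), m < n -> (forall i, i < n -> f i < m) ->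
  exists i1 i2, i1 < n /\ i2 < n /\ i1 <> i2 /\ f i1 = f i2.
Proof.
  induction n as [|n IH]; intros m f Hmn Hf; [lia|].
  destruct (classic (exists i, i < n /\ f i = f n)) as [[i [Hi Ei]]|Hno].
  - exists i, n. repeat split; lia.
  - destruct m as [|m]. { specialize (Hf 0 ltac:(lia)). lia. }
    set (y := f n).
    destruct (IH m (fun i => if f i <? y then f i else f i - 1)) as [i1 [i2 [H1 [H2 [H3 H4]]]]].
    + lia.
    + intros i Hi. assert (f i <> y) by (intro; apply Hno; eauto).
      assert (f n < S m) by (apply Hf; lia). specialize (Hf i ltac:(lia)).
      destruct (Nat.ltb_spec (f i) y); subst y; lia.
    + exists i1, i2. repeat split; try lia.
      assert (f i1 <> y) by (intro; apply Hno; eauto).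
      assert (f i2 <> y) by (intro; apply Hno; eauto).
      destruct (Nat.ltb_spec (f i1) y), (Nat.ltb_spec (f i2) y); lia.
Qed.

Lemma fin_bound N (P : nat -> nat -> Prop) :
  (forall x L L', L <= L' -> P x L -> P x L') ->
  (forall x, x < N -> exists L, P x L) -> exists L, forall x, x < N -> P x L.
Proof.
  intros Hm; induction N as [|N IH]; intros Hx.
  - exists 0; intros; lia.
  - destruct IH as [L1 H1]. { intros; apply Hx; lia. }
    destruct (Hx N ltac:(lia)) as [L2 H2].
    exists (L1 + L2). intros x Hx'.
    destruct (Nat.eq_dec x N) as [->|ne].
    + eapply Hm; [|exact H2]; lia.
    + eapply Hm; [|apply H1; lia]; lia.
Qed.

Definition Tc (B : nat -> nat) (c : nat) : nat -> nat :=
  fun n => match n with 0 => c | S m => if Nat.eqb (B m) c then 0 else 1 end.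
Definition valid (B : nat -> nat) (c : nat) := forall m, exists n, m <= n /\ B n <> c.

Lemma Tc_sol k B c : c < k -> valid B c -> TS_solution k B (Tc B c).
Proof.
  intros Hc Hv. unfold TS_solution, Tc. repeat split; auto.
  - intros n. destruct (Nat.eqb (B n) c); lia.
  - intros m. destruct (Hv m) as [n [Hn Ne]]. exists n. split; auto.
    apply Nat.eqb_neq in Ne. rewrite Ne. auto.
  - intros x. destruct (Nat.eqb_spec (B x) c); congruence.
Qed.

Lemma one_invalid B c1 c2 : c1 <> c2 -> valid B c1 \/ valid B c2.
Proof.
  intros ne. apply NNPP. intros Hn. apply not_or_and in Hn as [N1 N2].
  apply not_all_ex_not in N1 as [m1 N1]. apply not_all_ex_not in N2 as [m2 N2].
  assert (B (m1 + m2) = c1) by (apply NNPP; intro; apply N1; exists (m1+m2); split; [lia|auto]).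
  assert (B (m1 + m2) = c2) by (apply NNPP; intro; apply N2; exists (m1+m2); split; [lia|auto]).
  congruence.
Qed.

Lemma exists_bad B : exists b, forall c, c <> b -> valid B c.
Proof.
  destruct (classic (exists b, ~ valid B b)) as [[b Hb]|Hn].
  - exists b. intros c ne. destruct (one_invalid B c b ne); tauto.
  - exists 0. intros c _. apply NNPP. intro. apply Hn; eauto.
Qed.

Theorem theorem5p18 (j k : nat) (hj : 2 <= j) (hk : 2 <= k) (hjk : j < k) :
  ~ weihrauch_le (TS j) (TS k).
Proof.
  intros [Phi [Psi H]].
  set (g0 := fun _ : nat => 0).
  assert (I0 : TS_instance j g0) by (intro; unfold g0; lia).
  destruct (H g0 I0) as [[B0 [HB0 IB0]] H0].
  destruct (exists_bad B0) as [b Hb].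
  set (R := fun c d => c < k -> c <> b -> exists n M, 1 <= d < j /\
     (forall A', agree (join g0 (Tc B0 c)) A' M -> eval n A' Psi [0] = Some d)).
  assert (HR : forall c, {d | R c d}).
  { intro c. apply constructive_indefinite_description.
    destruct (classic (c < k /\ c <> b)) as [[Hc Hcb]|Hn].
    2:{ exists 0. unfold R. intros; exfalso; tauto. }
    destruct (H0 B0 HB0 (Tc B0 c) (Tc_sol k B0 c Hc (Hb c Hcb))) as [S [HS SS]].
    exists (S 0). intros _ _.
    destruct (HS 0) as [n En].
    destruct (eval_cont n Psi [0] (join g0 (Tc B0 c))) as [M HM].
    exists n, M. split.
    - destruct SS as [S0 [_ [Sinf Sav]]]. destruct (Sinf 0) as [x [_ Hx]].
      specialize (Sav x Hx). unfold g0 in Sav. lia.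
    - intros A' Ag. rewrite HM by exact Ag. exact En. }
  set (e := fun c => proj1_sig (HR c)).
  assert (He : forall c, R c (e c)) by (intro c; exact (proj2_sig (HR c))).
  set (col := fun i => if i <? b then i else S i).
  assert (Hcol1 : forall i, i < k - 1 -> col i < k /\ col i <> b).
  { intros i Hi. unfold col. destruct (Nat.ltb_spec i b); lia. }
  assert (Hcol2 : forall i1 i2, i1 <> i2 -> col i1 <> col i2).
  { intros i1 i2 ne. unfold col. destruct (Nat.ltb_spec i1 b), (Nat.ltb_spec i2 b); lia. }
  destruct (pigeon (k - 1) (j - 1) (fun i => e (col i) - 1)) as [i1 [i2 [Hi1 [Hi2 [Hne Heq]]]]].
  { lia. }
  { intros i Hi. destruct (Hcol1 i Hi) as [A1 A2].
    destruct (He (col i) A1 A2) as [n [M [Hd _]]]. lia. }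
  destruct (Hcol1 i1 Hi1) as [Ck1 Cb1]. destruct (Hcol1 i2 Hi2) as [Ck2 Cb2].
  destruct (He (col i1) Ck1 Cb1) as [n1 [M1 [Hd1 HM1]]].
  destruct (He (col i2) Ck2 Cb2) as [n2 [M2 [Hd2 HM2]]].
  set (d := e (col i1)).
  assert (Ed : e (col i2) = d) by (unfold d; simpl in Heq; lia).
  rewrite Ed in HM2. fold d in HM1, Hd1.
  set (Mp := M1 + M2).
  destruct (fin_bound Mp (fun x L => exists nx, forall A', agree g0 A' L -> eval nx A' Phi [x] = Some (B0 x)))
    as [L0 HL0].
  { intros x L L' Hl [nx Hnx]. exists nx. intros A' Ag. apply Hnx. eapply agree_mono; [|exact Ag]; lia. }
  { intros x _. destruct (HB0 x) as [nx Enx]. destruct (eval_cont nx Phi [x] g0) as [L HL].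
    exists L, nx. intros A' Ag. rewrite HL by exact Ag. exact Enx. }
  set (gd := fun x => if x <? L0 + Mp then 0 else d).
  assert (Id : TS_instance j gd).
  { intro x. unfold gd. destruct (x <? L0 + Mp); lia. }
  destruct (H gd Id) as [[Bd [HBd IBd]] Hd].
  assert (Agd : forall x, x < L0 + Mp -> gd x = 0).
  { intros x Hx. unfold gd. destruct (Nat.ltb_spec x (L0 + Mp)); lia. }
  assert (EB : forall x, x < Mp -> Bd x = B0 x).
  { intros x Hx. destruct (HL0 x Hx) as [nx Hnx].
    destruct (HBd x) as [nx' Enx'].
    assert (E1 : eval nx gd Phi [x] = Some (B0 x)).
    { apply Hnx. intros y Hy. apply Agd. lia. }
    symmetry. eapply eval_det; eauto. }
  assert (Key : forall c n M, c < k -> M <= Mp ->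
     (forall A', agree (join g0 (Tc B0 c)) A' M -> eval n A' Psi [0] = Some d) -> valid Bd c -> False).
  { intros c n M Hc HMp HM Hv.
    destruct (Hd Bd HBd (Tc Bd c) (Tc_sol k Bd c Hc Hv)) as [S [HS SS]].
    destruct (HS 0) as [n' En'].
    assert (E1 : eval n (join gd (Tc Bd c)) Psi [0] = Some d).
    { apply HM. intros y Hy. unfold join.
      assert (Hy2 : Nat.div2 y <= y) by (apply Nat.div2_decr; lia).
      destruct (Nat.even y).
      - unfold g0. apply Agd. lia.
      - unfold Tc. destruct (Nat.div2 y) as [|m] eqn:Em; auto.
        rewrite EB by lia. reflexivity. }
    assert (S0 : S 0 = d) by (symmetry; eapply eval_det; eauto).
    destruct SS as [_ [_ [Sinf Sav]]].
    destruct (Sinf (L0 + Mp)) as [x [Hx Hx1]].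
    specialize (Sav x Hx1). rewrite S0 in Sav. apply Sav.
    unfold gd. destruct (Nat.ltb_spec x (L0 + Mp)); lia. }
  destruct (one_invalid Bd (col i1) (col i2) (Hcol2 _ _ Hne)) as [V|V].
  - exact (Key _ n1 M1 Ck1 ltac:(unfold Mp; lia) HM1 V).
  - exact (Key _ n2 M2 Ck2 ltac:(unfold Mp; lia) HM2 V).
Qed.
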